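(* Let $S$ be a finite set of red and blue points in the plane in general position, containing at least one point of each color. Then every minimum bichromatic spanning tree of $S$ is quasi-plane, i.e., it does not contain three edges that pairwise cross.
   Context: A set of points is in general position if no three of them are collinear. A bichromatic spanning tree of a set $S$ of red and blue points is a spanning tree on vertex set $S$, drawn with straight-line segment edges, in which every edge has one red and one blue endpoint. A minimum bichromatic spanning tree (MinBST) is a bichromatic spanning tree of minimum total Euclidean edge length. Two edges (segments) cross if they share a point that is interior to both segments. A straight-line drawing is quasi-plane if no three of its edges pairwise cross. *)

(* Defs.v *)
From HB Require Import structures.
From mathcomp Require Import all_boot all_order all_algebra.
Set Implicit Arguments. Unset Strict Implicit. Unset Printing Implicit Defensive.
Import Order.TTheory GRing.Theory Num.Theory.
Local Open Scope ring_scope.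

Section Geometry.
Variable R : rcfType.

Definition pt := (R * R)%type.

Definition dist (a b : pt) : R :=
  Num.sqrt ((a.1 - b.1) ^+ 2 + (a.2 - b.2) ^+ 2).

Definition collinear (a b c : pt) : Prop :=
  (b.1 - a.1) * (c.2 - a.2) - (b.2 - a.2) * (c.1 - a.1) = 0.

Definition seg_cross (a b c d : pt) : Prop :=
  exists t u : R, [/\ 0 < t < 1, 0 < u < 1,
    a.1 + t * (b.1 - a.1) = c.1 + u * (d.1 - c.1) &
    a.2 + t * (b.2 - a.2) = c.2 + u * (d.2 - c.2)].

End Geometry.

Section Trees.
Variable T : finType.

(* Edges are stored as ordered pairs (red endpoint, blue endpoint);
   col x = true means x is red. *)
Definition adj (E : {set T * T}) : rel T :=
  [rel x y | ((x, y) \in E) || ((y, x) \in E)].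

Definition connected_graph (E : {set T * T}) : Prop :=
  forall x y : T, connect (adj E) x y.

Definition acyclic_graph (E : {set T * T}) : Prop :=
  forall c : seq T, (3 <= size c)%N -> uniq c -> ~~ cycle (adj E) c.

Definition is_spanning_tree (E : {set T * T}) : Prop :=
  connected_graph E /\ acyclic_graph E.

Definition bichromatic_edges (col : T -> bool) (E : {set T * T}) : Prop :=
  forall e, e \in E -> col e.1 = true /\ col e.2 = false.

Definition is_bst (col : T -> bool) (E : {set T * T}) : Prop :=
  bichromatic_edges col E /\ is_spanning_tree E.

Variable R : rcfType.

Definition tree_length (p : T -> pt R) (E : {set T * T}) : R :=
  \sum_(e in E) dist (p e.1) (p e.2).

Definition is_minbst (p : T -> pt R) (col : T -> bool) (E : {set T * T}) : Prop :=
  is_bst col E /\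
  forall F : {set T * T}, is_bst col F -> tree_length p E <= tree_length p F.

Definition general_position (p : T -> pt R) : Prop :=
  injective p /\
  forall i j k : T, i != j -> j != k -> i != k -> ~ collinear (p i) (p j) (p k).

Definition edges_cross (p : T -> pt R) (e f : T * T) : Prop :=
  seg_cross (p e.1) (p e.2) (p f.1) (p f.2).

Definition quasi_plane (p : T -> pt R) (E : {set T * T}) : Prop :=
  ~ exists e1 e2 e3 : T * T,
      [/\ e1 \in E, e2 \in E, e3 \in E,
          [/\ e1 != e2, e2 != e3 & e1 != e3] &
          [/\ edges_cross p e1 e2, edges_cross p e2 e3 & edges_cross p e1 e3]].

End Trees.

(* Main.v *)
Require Import Defs.
From HB Require Import structures.
From mathcomp Require Import all_boot all_order all_algebra.
From mathcomp Require Import lra ring.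
From Stdlib Require Import Classical.
Set Implicit Arguments. Unset Strict Implicit. Unset Printing Implicit Defensive.
Import Order.TTheory GRing.Theory Num.Theory.

Section Gr.
Variable T : finType.
Implicit Types E F G : {set T * T}.

Lemma adj_sym E : symmetric (adj E).
Proof. by move=> x y; rewrite /adj /= orbC. Qed.

Lemma csym E x y : connect (adj E) x y = connect (adj E) y x.
Proof. exact: (sym_connect_sym (adj_sym E)). Qed.

Lemma conn_sub E F : (forall x y, adj E x y -> connect (adj F) x y) ->
  forall x y, connect (adj E) x y -> connect (adj F) x y.
Proof. by move=> h x y; apply: connect_sub => u v /h. Qed.

Lemma adj_subset E F x y : E \subset F -> adj E x y -> adj F x y.
Proof. by move=> /subsetP s /orP[/s h|/s h]; rewrite /adj /= h ?orbT. Qed.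

Lemma two_comp E (e : T * T) : connected_graph E -> e \in E -> forall z,
  connect (adj (E :\ e)) e.1 z || connect (adj (E :\ e)) e.2 z.
Proof.
move=> cE eE z; have /connectP [s Hp ->] := cE e.1 z.
elim/last_ind: s Hp => [|s y IH]; first by rewrite /= connect0.
rewrite rcons_path last_rcons => /andP [/IH hu hy].
case: (boolP (adj (E :\ e) (last e.1 s) y)) => hy'.
  case/orP: hu => hu; apply/orP; [left|right]; apply: connect_trans hu _; exact: connect1.
move: hy hy'; rewrite /adj /= !in_setD1.
case: (eqVneq (last e.1 s, y) e) => [<-|ne1]; first by rewrite /= connect0 orbT.
case: (eqVneq (y, last e.1 s) e) => [<-|ne2]; first by rewrite /= connect0.
by move=> ->.
Qed.

Lemma exch_conn E (r b x y : T) : connected_graph E -> (r, b) \in E ->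
  connect (adj (E :\ (r, b))) r x != connect (adj (E :\ (r, b))) r y ->
  connected_graph ((x, y) |: (E :\ (r, b))).
Proof.
move=> cE eE hne.
set E' := E :\ (r, b).
set F := (x, y) |: E'.
have sub : E' \subset F by apply: subsetUr.
have cF : forall u v, connect (adj E') u v -> connect (adj F) u v.
  by apply: conn_sub => u v h; apply: connect1; apply: adj_subset h.
have fF : adj F x y by rewrite /adj /= setU11.
have fF' : adj F y x by rewrite adj_sym.
have key : connect (adj F) r b.
  have t1 := two_comp cE eE x; have t2 := two_comp cE eE y.
  move: hne t1 t2; rewrite /=.
  case h1: (connect (adj E') r x); case h2: (connect (adj E') r y) => //= _ t1 t2.
    apply: connect_trans (cF _ _ h1) _; apply: connect_trans (connect1 fF) _.
    by apply: cF; rewrite csym t2.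
  apply: connect_trans (cF _ _ h2) _; apply: connect_trans (connect1 fF') _.
  by apply: cF; rewrite csym.
move=> u v; apply: conn_sub (cE u v) => u' v' h.
case: (boolP (adj E' u' v')) => h'; first by apply: cF; apply: connect1.
move: h h'; rewrite /adj /= !in_setD1.
case: (eqVneq (u', v') (r, b)) => [[-> ->]|ne1] //.
case: (eqVneq (v', u') (r, b)) => [[-> ->]|ne2]; last by move=> ->.
by rewrite csym.
Qed.

Lemma adj_del F (x y u w : T) :
  adj F u w -> (u \notin [:: x; y]) || (w \notin [:: x; y]) ->
  forall e, (e = (x, y) \/ e = (y, x)) -> adj (F :\ e) u w.
Proof.
move=> h hn e he; move: h; rewrite /adj /= !in_setD1.
by case: he => ->; rewrite !xpair_eqE; case/orP: hn; rewrite !inE => /norP [h1 h2];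
  rewrite ?(negbTE h1) ?(negbTE h2) ?andbF /= ?andbT.
Qed.

Lemma path_del F (x y : T) e : (e = (x, y) \/ e = (y, x)) ->
  forall s u, s != [::] -> all (fun z => z \notin [:: x; y]) s ->
  path (adj F) u (rcons s x) -> path (adj (F :\ e)) u (rcons s x).
Proof.
move=> he; elim=> [|z s IH] u //= _ /andP [hz hs] /andP [h1 h2].
rewrite (adj_del h1 _ he) ?hz ?orbT //=.
case: s IH hs h2 => [|z' s'] IH hs h2.
  by move: h2 => /= /andP [h3 _]; rewrite (adj_del h3 _ he) ?hz.
by apply: IH.
Qed.

Definition bichrom (col : T -> bool) F := bichromatic_edges col F.

Lemma sub_tree (col : T -> bool) n : forall F, (#|F| <= n)%N -> connected_graph F ->
  bichromatic_edges col F -> exists F', F' \subset F /\ is_bst col F'.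
Proof.
elim: n => [|n IH] F hn cF bF;
  (case: (classic (acyclic_graph F)) => hac; first by exists F; split => //; split);
  have [c hc] := not_all_ex_not _ _ hac;
  (case: (boolP (3 <= size c)%N) => h3; last by exfalso; apply: hc => /(negP h3) []);
  (case: (boolP (uniq c)) => hu; last by exfalso; apply: hc => _ /(negP hu) []);
  (case: (boolP (cycle (adj F) c)) => hcy; last by exfalso; apply: hc => _ _; rewrite (negbTE hcy));
  (case: c h3 hu hcy {hc} => [|x [|y [|z s]]] //= _;
  move=> /andP [hx /andP [hy hus]] hcyc);
  (have hxy : adj F x y by case/andP: hcyc);
  (have hp : path (adj F) y (rcons (z :: s) x) by case/andP: hcyc);
  (have [e [he eF]] : exists e, (e = (x, y) \/ e = (y, x)) /\ e \in F by
     move: hxy; rewrite /adj /= => /orP [h|h]; [exists (x, y) | exists (y, x)]; split => //; [left|right]);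
  have cardF : #|F| = (#|F :\ e|).+1 by rewrite (cardsD1 e F) eF.
  by move: hn; rewrite cardF.
have hall : all (fun w => w \notin [:: x; y]) (z :: s).
  apply/allP => w ws; rewrite !inE; apply/norP; split; apply/eqP => ew; subst w.
    by move: hx; rewrite inE ws orbT.
  by move: hy; rewrite ws.
have pG : path (adj (F :\ e)) y (rcons (z :: s) x) by exact: (path_del he (s := z :: s) (u := y) isT hall hp).
have cyx : connect (adj (F :\ e)) y x.
  by apply/connectP; exists (rcons (z :: s) x) => //; rewrite last_rcons.
have cxy : connect (adj (F :\ e)) x y by rewrite csym.
have cG : connected_graph (F :\ e).
  move=> u v; apply: conn_sub (cF u v) => u' v' h.
  case: (boolP (adj (F :\ e) u' v')) => h'; first by apply: connect1.
  move: h h'; rewrite /adj /= !in_setD1.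
  case: (eqVneq (u', v') e) => [eq1|ne1].
    by move=> _ _; case: he eq1 cxy cyx => -> [-> ->] h1 h2; [exact: h1 | exact: h2].
  case: (eqVneq (v', u') e) => [eq2|ne2]; last by move=> ->.
  by move=> _ _; case: he eq2 cxy cyx => -> [-> ->] h1 h2; [exact: h2 | exact: h1].
have bG : bichromatic_edges col (F :\ e).
  by move=> f; rewrite in_setD1 => /andP [_ /bF].
have hle : (#|F :\ e| <= n)%N by rewrite -ltnS -cardF.
have [F' [sF' bst]] := IH (F :\ e) hle cG bG.
exists F'; split => //; apply: subset_trans sF' _; exact: subsetDl.
Qed.

Lemma cut_edge (col : T -> bool) E r b : is_bst col E -> (r, b) \in E ->
  connect (adj (E :\ (r, b))) r b = false.
Proof.
move=> [bE [cE aE]] eE; apply/negP => /connectP [s0 hp0 hl0].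
have [cr cb] := bE _ eE; rewrite /= in cr cb.
case: (shortenP hp0) hl0 => s hp hu _ hl.
have hp' : path (adj E) r s.
  by apply: sub_path hp => u v; apply: adj_subset; apply: subsetDl.
have hbr : adj E b r by rewrite /adj /= eE orbT.
case: s hp hu hl hp' => [|z [|z' s]] /=.
- move=> _ _ hrb; move: cr cb; rewrite hrb => ->; done.
- move=> /andP [hz _] _ hzb _; rewrite -hzb in hz.
  move: hz; rewrite /adj /= !in_setD1 eqxx /= => /andP [_ /bE] /= [hb _].
  by rewrite hb in cb.
move=> _ hu hl /andP [h1 /andP [h2 h3]].
have := aE (r :: z :: z' :: s) isT hu.
rewrite /cycle /= h1 h2 /= rcons_path h3 /=.
by move: hl => /= <-; rewrite hbr.
Qed.

Lemma conn_edge E (x y z : T) : (x, y) \in E ->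
  connect (adj E) z y = connect (adj E) z x.
Proof.
move=> hxy; apply/idP/idP => h; apply: (connect_trans h); apply: connect1;
  by rewrite /adj /= hxy ?orbT.
Qed.

Lemma neq_col (col : T -> bool) x y : col x = true -> col y = false -> x != y.
Proof. by move=> hx hy; apply/eqP => h; rewrite h hy in hx. Qed.

End Gr.

Local Open Scope ring_scope.

Section G.
Variable R : rcfType.
Implicit Types a b c d q r : pt R.

Lemma dist_ge0 a b : 0 <= dist a b.
Proof. exact: sqrtr_ge0. Qed.

Lemma dist_sym a b : dist a b = dist b a.
Proof. by rewrite /dist; congr Num.sqrt; ring. Qed.

Lemma dist_scale (u v : pt R) a b (k : R) :
  u.1 - v.1 = k * (b.1 - a.1) -> u.2 - v.2 = k * (b.2 - a.2) ->
  dist v u = `|k| * dist a b.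
Proof.
move=> h1 h2; rewrite /dist.
have -> : (v.1 - u.1) ^+ 2 + (v.2 - u.2) ^+ 2 =
   k ^+ 2 * ((a.1 - b.1) ^+ 2 + (a.2 - b.2) ^+ 2).
  have -> : v.1 - u.1 = - (u.1 - v.1) by ring.
  have -> : v.2 - u.2 = - (u.2 - v.2) by ring.
  rewrite h1 h2; ring.
by rewrite sqrtrM ?sqr_ge0 // sqrtr_sqr.
Qed.

Lemma tri_core (u1 u2 v1 v2 : R) :
  Num.sqrt ((u1 + v1) ^+ 2 + (u2 + v2) ^+ 2) <=
  Num.sqrt (u1 ^+ 2 + u2 ^+ 2) + Num.sqrt (v1 ^+ 2 + v2 ^+ 2)
  /\ (u1 * v2 - u2 * v1 != 0 ->
  Num.sqrt ((u1 + v1) ^+ 2 + (u2 + v2) ^+ 2) <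
  Num.sqrt (u1 ^+ 2 + u2 ^+ 2) + Num.sqrt (v1 ^+ 2 + v2 ^+ 2)).
Proof.
set U := u1 ^+ 2 + u2 ^+ 2; set V := v1 ^+ 2 + v2 ^+ 2.
set W := u1 * v1 + u2 * v2.
have U0 : 0 <= U by rewrite /U; nra.
have V0 : 0 <= V by rewrite /V; nra.
have lag : U * V - W ^+ 2 = (u1 * v2 - u2 * v1) ^+ 2 by rewrite /U /V /W; ring.
have eX : (u1 + v1) ^+ 2 + (u2 + v2) ^+ 2 = U + V + 2 * W by rewrite /U /V /W; ring.
have sU := sqrtr_ge0 U; have sV := sqrtr_ge0 V.
have sUV : Num.sqrt U * Num.sqrt V = Num.sqrt (U * V) by rewrite sqrtrM.
have eS : (Num.sqrt U + Num.sqrt V) ^+ 2 = U + V + 2 * Num.sqrt (U * V).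
  by rewrite -sUV sqrrD !sqr_sqrtr //; ring.
have hW : W <= Num.sqrt (U * V).
  case: (lerP W 0) => hw; first by apply: le_trans hw (sqrtr_ge0 _).
  rewrite -(ger0_norm (ltW hw)) -sqrtr_sqr ler_wsqrtr //.
  by rewrite -subr_ge0 lag sqr_ge0.
split.
  rewrite eX -[X in _ <= X]ger0_norm ?addr_ge0 // -sqrtr_sqr eS ler_wsqrtr //.
  by lra.
move=> hc.
have lt : W ^+ 2 < U * V.
  by rewrite -subr_gt0 lag lt_def sqrf_eq0 hc sqr_ge0.
have hW' : W < Num.sqrt (U * V).
  case: (lerP W 0) => hw.
    apply: le_lt_trans hw _; rewrite sqrtr_gt0; apply: le_lt_trans lt; exact: sqr_ge0.
  rewrite -(ger0_norm (ltW hw)) -sqrtr_sqr ltr_sqrt //.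
  apply: le_lt_trans lt; exact: sqr_ge0.
have UVp : 0 < U * V by apply: le_lt_trans lt; exact: sqr_ge0.
have Up : 0 < U.
  rewrite lt_def U0 andbT; apply/eqP => h; move: UVp; rewrite h mul0r ltxx.
  by [].
have pos : 0 < Num.sqrt U + Num.sqrt V.
  have := sqrtr_ge0 V; have : 0 < Num.sqrt U by rewrite sqrtr_gt0.
  by move=> *; lra.
rewrite eX -[X in _ < X]ger0_norm ?addr_ge0 // -sqrtr_sqr eS ltr_sqrt; last first.
  by have := sqrtr_ge0 (U * V); lra.
by lra.
Qed.

Lemma tri_gen a b c :
  dist a c <= dist a b + dist b c /\ (~ collinear a b c -> dist a c < dist a b + dist b c).
Proof.
have [h1 h2] := tri_core (b.1 - a.1) (b.2 - a.2) (c.1 - b.1) (c.2 - b.2).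
have eac : dist a c = Num.sqrt ((b.1 - a.1 + (c.1 - b.1)) ^+ 2 + (b.2 - a.2 + (c.2 - b.2)) ^+ 2).
  by rewrite /dist; congr Num.sqrt; ring.
have eab : dist a b = Num.sqrt ((b.1 - a.1) ^+ 2 + (b.2 - a.2) ^+ 2).
  by rewrite /dist; congr Num.sqrt; ring.
have ebc : dist b c = Num.sqrt ((c.1 - b.1) ^+ 2 + (c.2 - b.2) ^+ 2).
  by rewrite /dist; congr Num.sqrt; ring.
rewrite eac eab ebc; split => // hnc; apply: h2; apply/eqP => h; apply: hnc.
rewrite /collinear -h; ring.
Qed.

Lemma tri a b c : dist a c <= dist a b + dist b c.
Proof. by case: (tri_gen a b c). Qed.

Lemma tri_strict a b c : ~ collinear a b c -> dist a c < dist a b + dist b c.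
Proof. by case: (tri_gen a b c). Qed.

Definition on a b q (t : R) :=
  q.1 - a.1 = t * (b.1 - a.1) /\ q.2 - a.2 = t * (b.2 - a.2).

Lemma cross_on a b c d : seg_cross a b c d ->
  exists q t u, [/\ 0 < t < 1, 0 < u < 1, on a b q t & on c d q u].
Proof.
case=> t [u [ht hu e1 e2]].
exists (a.1 + t * (b.1 - a.1), a.2 + t * (b.2 - a.2)), t, u; split => //.
  by rewrite /on /=; split; ring.
by rewrite /on /= e1 e2; split; ring.
Qed.

Lemma D1 a b q t : on a b q t -> 0 <= t -> dist a q = t * dist a b.
Proof. by case=> h1 h2 t0; rewrite (dist_scale h1 h2) ger0_norm. Qed.

Lemma D2 a b q t : on a b q t -> t <= 1 -> dist q b = dist a b - t * dist a b.
Proof.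
case=> h1 h2 t1.
have h1' : b.1 - q.1 = (1 - t) * (b.1 - a.1) by rewrite mulrBl mul1r -h1; ring.
have h2' : b.2 - q.2 = (1 - t) * (b.2 - a.2) by rewrite mulrBl mul1r -h2; ring.
rewrite (dist_scale h1' h2') ger0_norm ?subr_ge0 //; ring.
Qed.

Lemma D3 a b q (q' : pt R) t t' : on a b q t -> on a b q' t' ->
  dist q q' = t * dist a b - t' * dist a b \/ dist q q' = t' * dist a b - t * dist a b.
Proof.
case=> h1 h2 [h1' h2'].
have e1 : q'.1 - q.1 = (t' - t) * (b.1 - a.1).
  by rewrite mulrBl -h1 -h1'; ring.
have e2 : q'.2 - q.2 = (t' - t) * (b.2 - a.2).
  by rewrite mulrBl -h2 -h2'; ring.
rewrite (dist_scale e1 e2); case: (lerP 0 (t' - t)) => h.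
  by right; rewrite ger0_norm //; ring.
by left; rewrite ltr0_norm //; ring.
Qed.

Lemma NC (ri rj bj : pt R) q u : on rj bj q u -> u < 1 -> ~ collinear ri rj bj ->
  ~ collinear ri q bj.
Proof.
case=> h1 h2 u1 nc hc; apply: nc; move: hc; rewrite /collinear.
have -> : q.1 = rj.1 + u * (bj.1 - rj.1) by rewrite -h1; ring.
have -> : q.2 = rj.2 + u * (bj.2 - rj.2) by rewrite -h2; ring.
move=> h.
have : (1 - u) * ((rj.1 - ri.1) * (bj.2 - ri.2) - (rj.2 - ri.2) * (bj.1 - ri.1)) = 0.
  by rewrite -h; ring.
move/eqP; rewrite mulf_eq0 subr_eq0 => /orP [/eqP hu|/eqP //].
by move: u1; rewrite -hu ltxx.
Qed.

Lemma P1 (ri bi rj bj : pt R) q t u : on ri bi q t -> on rj bj q u -> 0 < t < 1 -> 0 < u < 1 ->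
  ~ collinear ri rj bj ->
  dist ri bj < t * dist ri bi + (dist rj bj - u * dist rj bj).
Proof.
move=> o1 o2 /andP [t0 t1] /andP [u0 u1] nc.
have := tri_strict (NC o2 u1 nc).
by rewrite (D1 o1 (ltW t0)) (D2 o2 (ltW u1)).
Qed.

Lemma P2 (ri bi rj bj q1 q2 : pt R) t1 t2 : on ri bi q1 t1 -> on rj bj q2 t2 ->
  0 < t1 < 1 -> 0 < t2 < 1 -> ~ collinear ri rj bj ->
  dist ri bj < t1 * dist ri bi + dist q1 q2 + (dist rj bj - t2 * dist rj bj).
Proof.
move=> o1 o2 /andP [t0 t1'] /andP [u0 u1] nc.
have h1 := tri_strict (NC o2 u1 nc).
have h2 := tri ri q1 q2.
rewrite (D2 o2 (ltW u1)) in h1; rewrite (D1 o1 (ltW t0)) in h2.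
by apply: lt_le_trans h1 _; rewrite lerD2r.
Qed.

Lemma rng (t L : R) : 0 < t < 1 -> 0 <= L -> 0 <= t * L /\ t * L <= L.
Proof. by move=> /andP [t0 t1] L0; split; nra. Qed.

Lemma col_shared r (bi bj : pt R) q t u : on r bi q t -> on r bj q u -> 0 < t -> collinear r bi bj.
Proof.
case=> h1 h2 [h1' h2'] t0; rewrite /collinear.
have : t * ((bi.1 - r.1) * (bj.2 - r.2) - (bi.2 - r.2) * (bj.1 - r.1)) =
   (q.1 - r.1) * (bj.2 - r.2) - (q.2 - r.2) * (bj.1 - r.1).
  by rewrite h1 h2; ring.
rewrite h1' h2'.
have -> : u * (bj.1 - r.1) * (bj.2 - r.2) - u * (bj.2 - r.2) * (bj.1 - r.1) = 0 by ring.
by move/eqP; rewrite mulf_eq0 (gt_eqF t0) => /eqP.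
Qed.

End G.

Section L.
Variable R : rcfType.
Variable T : finType.
Variable p : T -> pt R.

Lemma tl_ge0 (A : {set T * T}) : 0 <= \sum_(e in A) dist (p e.1) (p e.2).
Proof. by apply: sumr_ge0 => e _; apply: dist_ge0. Qed.

Lemma tl_sub (A B : {set T * T}) : A \subset B -> tree_length p A <= tree_length p B.
Proof.
move=> sAB; rewrite /tree_length [X in _ <= X](big_setID A) /= (setIidPr sAB).
by rewrite lerDl; apply: tl_ge0.
Qed.

Lemma tl_U1 (A : {set T * T}) f :
  tree_length p (f |: A) <= dist (p f.1) (p f.2) + tree_length p A.
Proof.
rewrite /tree_length; case: (boolP (f \in A)) => hf.
  by rewrite (setUidPr _) ?sub1set // lerDr dist_ge0.
by rewrite big_setU1.
Qed.

Lemma tl_D1 (A : {set T * T}) f : f \in A ->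
  tree_length p A = dist (p f.1) (p f.2) + tree_length p (A :\ f).
Proof. by move=> hf; rewrite /tree_length (big_setD1 f hf). Qed.

Lemma exch_le col E (r b x y : T) :
  is_minbst p col E -> (r, b) \in E -> col x -> ~~ col y ->
  connect (adj (E :\ (r, b))) r x != connect (adj (E :\ (r, b))) r y ->
  dist (p r) (p b) <= dist (p x) (p y).
Proof.
move=> [[bE [cE aE]] mE] eE cx cy hne.
set F := (x, y) |: (E :\ (r, b)).
have cF : connected_graph F by apply: exch_conn.
have bF : bichromatic_edges col F.
  move=> f; rewrite !inE => /orP [/eqP -> | /andP [_ /bE]] //=.
  by rewrite cx (negbTE cy).
have [F' [sF' bst]] := sub_tree (leqnn _) cF bF.
have h1 := mE F' bst.
have h2 := tl_sub sF'.
have h3 := tl_U1 (E :\ (r, b)) (x, y).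
have h4 := tl_D1 eE.
rewrite /= in h3 h4.
rewrite -/F in h3; lra.
Qed.

End L.

Lemma key (R : realFieldType) (L0 L1 L2 a01 a02 a10 a12 a20 a21 x01 x02 x10 x12 x20 x21 m0 m1 m2 : R) (b01 b02 b10 b12 b20 b21 : bool) :
  (0 <= a01) ->
  (a01 <= L0) ->
  (0 <= a02) ->
  (a02 <= L0) ->
  (0 <= a10) ->
  (a10 <= L1) ->
  (0 <= a12) ->
  (a12 <= L1) ->
  (0 <= a20) ->
  (a20 <= L2) ->
  (0 <= a21) ->
  (a21 <= L2) ->
  (m0 = a01 - a02 \/ m0 = a02 - a01) ->
  (m1 = a10 - a12 \/ m1 = a12 - a10) ->
  (m2 = a20 - a21 \/ m2 = a21 - a20) ->
  (x01 < a01 + (L1 - a10)) ->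
  (x01 < a02 + m2 + (L1 - a12)) ->
  (x02 < a02 + (L2 - a20)) ->
  (x02 < a01 + m1 + (L2 - a21)) ->
  (x10 < a10 + (L0 - a01)) ->
  (x10 < a12 + m2 + (L0 - a02)) ->
  (x12 < a12 + (L2 - a21)) ->
  (x12 < a10 + m0 + (L2 - a20)) ->
  (x20 < a20 + (L0 - a02)) ->
  (x20 < a21 + m1 + (L0 - a01)) ->
  (x21 < a21 + (L1 - a12)) ->
  (x21 < a20 + m0 + (L1 - a10)) ->
  (true != b01 -> L0 <= x01) ->
  (true != b02 -> L0 <= x02) ->
  (b01 != false -> L0 <= x10) ->
  (b01 != b02 -> L0 <= x12) ->
  (b02 != false -> L0 <= x20) ->
  (b02 != b01 -> L0 <= x21) ->
  (b10 != false -> L1 <= x01) ->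
  (b10 != b12 -> L1 <= x02) ->
  (true != b10 -> L1 <= x10) ->
  (true != b12 -> L1 <= x12) ->
  (b12 != b10 -> L1 <= x20) ->
  (b12 != false -> L1 <= x21) ->
  (b20 != b21 -> L2 <= x01) ->
  (b20 != false -> L2 <= x02) ->
  (b21 != b20 -> L2 <= x10) ->
  (b21 != false -> L2 <= x12) ->
  (true != b20 -> L2 <= x20) ->
  (true != b21 -> L2 <= x21) ->
  False.
Proof.
move=> H0 H1 H2 H3 H4 H5 H6 H7 H8 H9 H10 H11 H12 H13 H14 H15 H16 H17 H18 H19 H20 H21 H22 H23 H24 H25 H26 H27 H28 H29 H30 H31 H32 H33 H34 H35 H36 H37 H38 H39 H40 H41 H42 H43 H44.
move: b01 b02 b10 b12 b20 b21 H27 H28 H29 H30 H31 H32 H33 H34 H35 H36 H37 H38 H39 H40 H41 H42 H43 H44.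
move=> [] [] [] [] [] [] /= H27 H28 H29 H30 H31 H32 H33 H34 H35 H36 H37 H38 H39 H40 H41 H42 H43 H44.
have G38 := H38 isT. have G42 := H42 isT. by clear -H21 H25 G38 G42; lra.
have G31 := H31 isT. have G40 := H40 isT. by clear -H17 H23 G31 G40; lra.
have G38 := H38 isT. have G42 := H42 isT. by clear -H21 H25 G38 G42; lra.
have G29 := H29 isT. have G33 := H33 isT. by clear -H15 H19 G29 G33; lra.
have G31 := H31 isT. have G40 := H40 isT. by clear -H17 H23 G31 G40; lra.
have G36 := H36 isT. have G44 := H44 isT. by clear -H21 H25 G36 G44; lra.
have G29 := H29 isT. have G33 := H33 isT. by clear -H15 H19 G29 G33; lra.
have G36 := H36 isT. have G44 := H44 isT. by clear -H21 H25 G36 G44; lra.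
have G38 := H38 isT. have G42 := H42 isT. by clear -H21 H25 G38 G42; lra.
have G31 := H31 isT. have G40 := H40 isT. by clear -H17 H23 G31 G40; lra.
have G38 := H38 isT. have G42 := H42 isT. by clear -H21 H25 G38 G42; lra.
case: H12 => H12; case: H13 => H13; case: H14 => H14.
have G29 := H29 isT. have G34 := H34 isT. have G44 := H44 isT. by clear -H14 H17 H20 H25 G29 G34 G44; lra.
have G29 := H29 isT. have G34 := H34 isT. have G44 := H44 isT. by clear -H12 H17 H19 H26 G29 G34 G44; lra.
have G29 := H29 isT. have G34 := H34 isT. have G44 := H44 isT. by clear -H14 H17 H20 H25 G29 G34 G44; lra.
have G29 := H29 isT. have G34 := H34 isT. have G44 := H44 isT. by clear -H13 H18 H19 H25 G29 G34 G44; lra.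
have G29 := H29 isT. have G34 := H34 isT. have G44 := H44 isT. by clear -H14 H17 H20 H25 G29 G34 G44; lra.
have G29 := H29 isT. have G34 := H34 isT. have G44 := H44 isT. by clear -H12 H13 H14 H18 H20 H26 G29 G34 G44; lra.
have G29 := H29 isT. have G34 := H34 isT. have G44 := H44 isT. by clear -H14 H17 H20 H25 G29 G34 G44; lra.
have G29 := H29 isT. have G34 := H34 isT. have G44 := H44 isT. by clear -H13 H18 H19 H25 G29 G34 G44; lra.
have G31 := H31 isT. have G40 := H40 isT. by clear -H17 H23 G31 G40; lra.
have G36 := H36 isT. have G44 := H44 isT. by clear -H21 H25 G36 G44; lra.
case: H12 => H12; case: H13 => H13; case: H14 => H14.
have G31 := H31 isT. have G36 := H36 isT. have G39 := H39 isT. by clear -H13 H15 H21 H24 G31 G36 G39; lra.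
have G31 := H31 isT. have G36 := H36 isT. have G39 := H39 isT. by clear -H14 H16 H21 H23 G31 G36 G39; lra.
have G31 := H31 isT. have G36 := H36 isT. have G39 := H39 isT. by clear -H12 H13 H14 H16 H22 H24 G31 G36 G39; lra.
have G31 := H31 isT. have G36 := H36 isT. have G39 := H39 isT. by clear -H14 H16 H21 H23 G31 G36 G39; lra.
have G31 := H31 isT. have G36 := H36 isT. have G39 := H39 isT. by clear -H13 H15 H21 H24 G31 G36 G39; lra.
have G31 := H31 isT. have G36 := H36 isT. have G39 := H39 isT. by clear -H14 H16 H21 H23 G31 G36 G39; lra.
have G31 := H31 isT. have G36 := H36 isT. have G39 := H39 isT. by clear -H12 H15 H22 H23 G31 G36 G39; lra.
have G31 := H31 isT. have G36 := H36 isT. have G39 := H39 isT. by clear -H14 H16 H21 H23 G31 G36 G39; lra.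
have G36 := H36 isT. have G44 := H44 isT. by clear -H21 H25 G36 G44; lra.
have G38 := H38 isT. have G42 := H42 isT. by clear -H21 H25 G38 G42; lra.
have G29 := H29 isT. have G33 := H33 isT. by clear -H15 H19 G29 G33; lra.
have G38 := H38 isT. have G42 := H42 isT. by clear -H21 H25 G38 G42; lra.
have G28 := H28 isT. have G43 := H43 isT. by clear -H17 H23 G28 G43; lra.
have G32 := H32 isT. have G37 := H37 isT. have G40 := H40 isT. have G42 := H42 isT. by clear -H17 H21 H23 H25 G32 G37 G40 G42; lra.
have G36 := H36 isT. have G44 := H44 isT. by clear -H21 H25 G36 G44; lra.
have G28 := H28 isT. have G43 := H43 isT. by clear -H17 H23 G28 G43; lra.
have G36 := H36 isT. have G44 := H44 isT. by clear -H21 H25 G36 G44; lra.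
have G38 := H38 isT. have G42 := H42 isT. by clear -H21 H25 G38 G42; lra.
have G30 := H30 isT. have G37 := H37 isT. have G40 := H40 isT. have G44 := H44 isT. by clear -H17 H21 H23 H25 G30 G37 G40 G44; lra.
have G38 := H38 isT. have G42 := H42 isT. by clear -H21 H25 G38 G42; lra.
have G28 := H28 isT. have G43 := H43 isT. by clear -H17 H23 G28 G43; lra.
case: H12 => H12; case: H13 => H13; case: H14 => H14.
have G32 := H32 isT. have G35 := H35 isT. have G40 := H40 isT. by clear -H14 H17 H20 H25 G32 G35 G40; lra.
have G32 := H32 isT. have G35 := H35 isT. have G40 := H40 isT. by clear -H12 H17 H19 H26 G32 G35 G40; lra.
have G32 := H32 isT. have G35 := H35 isT. have G40 := H40 isT. by clear -H14 H17 H20 H25 G32 G35 G40; lra.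
have G32 := H32 isT. have G35 := H35 isT. have G40 := H40 isT. by clear -H13 H18 H19 H25 G32 G35 G40; lra.
have G32 := H32 isT. have G35 := H35 isT. have G40 := H40 isT. by clear -H14 H17 H20 H25 G32 G35 G40; lra.
have G32 := H32 isT. have G35 := H35 isT. have G40 := H40 isT. by clear -H12 H13 H14 H18 H20 H26 G32 G35 G40; lra.
have G32 := H32 isT. have G35 := H35 isT. have G40 := H40 isT. by clear -H14 H17 H20 H25 G32 G35 G40; lra.
have G32 := H32 isT. have G35 := H35 isT. have G40 := H40 isT. by clear -H13 H18 H19 H25 G32 G35 G40; lra.
have G36 := H36 isT. have G44 := H44 isT. by clear -H21 H25 G36 G44; lra.
have G28 := H28 isT. have G43 := H43 isT. by clear -H17 H23 G28 G43; lra.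
have G36 := H36 isT. have G44 := H44 isT. by clear -H21 H25 G36 G44; lra.
have G38 := H38 isT. have G42 := H42 isT. by clear -H21 H25 G38 G42; lra.
have G31 := H31 isT. have G40 := H40 isT. by clear -H17 H23 G31 G40; lra.
have G38 := H38 isT. have G42 := H42 isT. by clear -H21 H25 G38 G42; lra.
case: H12 => H12; case: H13 => H13; case: H14 => H14.
have G30 := H30 isT. have G33 := H33 isT. have G43 := H43 isT. by clear -H13 H15 H21 H24 G30 G33 G43; lra.
have G30 := H30 isT. have G33 := H33 isT. have G43 := H43 isT. by clear -H14 H16 H21 H23 G30 G33 G43; lra.
have G30 := H30 isT. have G33 := H33 isT. have G43 := H43 isT. by clear -H12 H13 H14 H16 H22 H24 G30 G33 G43; lra.
have G30 := H30 isT. have G33 := H33 isT. have G43 := H43 isT. by clear -H14 H16 H21 H23 G30 G33 G43; lra.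
have G30 := H30 isT. have G33 := H33 isT. have G43 := H43 isT. by clear -H13 H15 H21 H24 G30 G33 G43; lra.
have G30 := H30 isT. have G33 := H33 isT. have G43 := H43 isT. by clear -H14 H16 H21 H23 G30 G33 G43; lra.
have G30 := H30 isT. have G33 := H33 isT. have G43 := H43 isT. by clear -H12 H15 H22 H23 G30 G33 G43; lra.
have G30 := H30 isT. have G33 := H33 isT. have G43 := H43 isT. by clear -H14 H16 H21 H23 G30 G33 G43; lra.
have G31 := H31 isT. have G40 := H40 isT. by clear -H17 H23 G31 G40; lra.
have G36 := H36 isT. have G44 := H44 isT. by clear -H21 H25 G36 G44; lra.
have G32 := H32 isT. have G34 := H34 isT. have G42 := H42 isT. have G43 := H43 isT. by clear -H17 H21 H23 H25 G32 G34 G42 G43; lra.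
have G36 := H36 isT. have G44 := H44 isT. by clear -H21 H25 G36 G44; lra.
have G38 := H38 isT. have G42 := H42 isT. by clear -H21 H25 G38 G42; lra.
have G31 := H31 isT. have G40 := H40 isT. by clear -H17 H23 G31 G40; lra.
have G38 := H38 isT. have G42 := H42 isT. by clear -H21 H25 G38 G42; lra.
have G30 := H30 isT. have G34 := H34 isT. have G43 := H43 isT. have G44 := H44 isT. by clear -H17 H21 H23 H25 G30 G34 G43 G44; lra.
have G31 := H31 isT. have G40 := H40 isT. by clear -H17 H23 G31 G40; lra.
have G36 := H36 isT. have G44 := H44 isT. by clear -H21 H25 G36 G44; lra.
have G27 := H27 isT. have G35 := H35 isT. by clear -H15 H19 G27 G35; lra.
have G36 := H36 isT. have G44 := H44 isT. by clear -H21 H25 G36 G44; lra.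
have G38 := H38 isT. have G42 := H42 isT. by clear -H21 H25 G38 G42; lra.
case: H12 => H12; case: H13 => H13; case: H14 => H14.
have G28 := H28 isT. have G38 := H38 isT. have G41 := H41 isT. by clear -H14 H17 H20 H25 G28 G38 G41; lra.
have G28 := H28 isT. have G38 := H38 isT. have G41 := H41 isT. by clear -H12 H17 H19 H26 G28 G38 G41; lra.
have G28 := H28 isT. have G38 := H38 isT. have G41 := H41 isT. by clear -H14 H17 H20 H25 G28 G38 G41; lra.
have G28 := H28 isT. have G38 := H38 isT. have G41 := H41 isT. by clear -H13 H18 H19 H25 G28 G38 G41; lra.
have G28 := H28 isT. have G38 := H38 isT. have G41 := H41 isT. by clear -H14 H17 H20 H25 G28 G38 G41; lra.
have G28 := H28 isT. have G38 := H38 isT. have G41 := H41 isT. by clear -H12 H13 H14 H18 H20 H26 G28 G38 G41; lra.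
have G28 := H28 isT. have G38 := H38 isT. have G41 := H41 isT. by clear -H14 H17 H20 H25 G28 G38 G41; lra.
have G28 := H28 isT. have G38 := H38 isT. have G41 := H41 isT. by clear -H13 H18 H19 H25 G28 G38 G41; lra.
have G38 := H38 isT. have G42 := H42 isT. by clear -H21 H25 G38 G42; lra.
have G28 := H28 isT. have G43 := H43 isT. by clear -H17 H23 G28 G43; lra.
case: H12 => H12; case: H13 => H13; case: H14 => H14.
have G27 := H27 isT. have G37 := H37 isT. have G42 := H42 isT. by clear -H13 H15 H21 H24 G27 G37 G42; lra.
have G27 := H27 isT. have G37 := H37 isT. have G42 := H42 isT. by clear -H14 H16 H21 H23 G27 G37 G42; lra.
have G27 := H27 isT. have G37 := H37 isT. have G42 := H42 isT. by clear -H12 H13 H14 H16 H22 H24 G27 G37 G42; lra.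
have G27 := H27 isT. have G37 := H37 isT. have G42 := H42 isT. by clear -H14 H16 H21 H23 G27 G37 G42; lra.
have G27 := H27 isT. have G37 := H37 isT. have G42 := H42 isT. by clear -H13 H15 H21 H24 G27 G37 G42; lra.
have G27 := H27 isT. have G37 := H37 isT. have G42 := H42 isT. by clear -H14 H16 H21 H23 G27 G37 G42; lra.
have G27 := H27 isT. have G37 := H37 isT. have G42 := H42 isT. by clear -H12 H15 H22 H23 G27 G37 G42; lra.
have G27 := H27 isT. have G37 := H37 isT. have G42 := H42 isT. by clear -H14 H16 H21 H23 G27 G37 G42; lra.
have G36 := H36 isT. have G44 := H44 isT. by clear -H21 H25 G36 G44; lra.
have G28 := H28 isT. have G43 := H43 isT. by clear -H17 H23 G28 G43; lra.
have G36 := H36 isT. have G44 := H44 isT. by clear -H21 H25 G36 G44; lra.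
have G38 := H38 isT. have G42 := H42 isT. by clear -H21 H25 G38 G42; lra.
have G27 := H27 isT. have G35 := H35 isT. by clear -H15 H19 G27 G35; lra.
have G38 := H38 isT. have G42 := H42 isT. by clear -H21 H25 G38 G42; lra.
have G28 := H28 isT. have G43 := H43 isT. by clear -H17 H23 G28 G43; lra.
have G27 := H27 isT. have G35 := H35 isT. by clear -H15 H19 G27 G35; lra.
have G36 := H36 isT. have G44 := H44 isT. by clear -H21 H25 G36 G44; lra.
have G28 := H28 isT. have G43 := H43 isT. by clear -H17 H23 G28 G43; lra.
have G36 := H36 isT. have G44 := H44 isT. by clear -H21 H25 G36 G44; lra.
Qed.



Theorem theorem4 (R : rcfType) (T : finType) (p : T -> pt R) (col : T -> bool)
  (E : {set T * T}) :
  general_position p ->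
  (exists r : T, col r) -> (exists b : T, ~~ col b) ->
  is_minbst p col E ->
  quasi_plane p E.
Proof.
move=> [pinj gp] _ _ mE [[r0 b0] [[r1 b1] [[r2 b2] [e0E e1E e2E [n01 n12 n02] [c01 c12 c02]]]]].
have bE := mE.1.1.
have [cr0 cb0] := bE _ e0E; rewrite /= in cr0 cb0.
have [cr1 cb1] := bE _ e1E; rewrite /= in cr1 cb1.
have [cr2 cb2] := bE _ e2E; rewrite /= in cr2 cb2.
rewrite /edges_cross /= in c01 c12 c02.
have [q01 [t01 [t10 [ht01 ht10 o01 o10]]]] := cross_on c01.
have [q12 [t12 [t21 [ht12 ht21 o12 o21]]]] := cross_on c12.
have [q02 [t02 [t20 [ht02 ht20 o02 o20]]]] := cross_on c02.
have rr01 : r0 != r1.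
  apply/eqP => e; subst r1.
  have nb : b0 != b1 by apply/eqP => eb; move: n01; rewrite eb eqxx.
  apply: (gp r0 b0 b1 (neq_col cr0 cb0) nb (neq_col cr0 cb1)).
  exact: (col_shared o01 o10 (proj1 (andP ht01))).
have rr12 : r1 != r2.
  apply/eqP => e; subst r2.
  have nb : b1 != b2 by apply/eqP => eb; move: n12; rewrite eb eqxx.
  apply: (gp r1 b1 b2 (neq_col cr1 cb1) nb (neq_col cr1 cb2)).
  exact: (col_shared o12 o21 (proj1 (andP ht12))).
have rr02 : r0 != r2.
  apply/eqP => e; subst r2.
  have nb : b0 != b2 by apply/eqP => eb; move: n02; rewrite eb eqxx.
  apply: (gp r0 b0 b2 (neq_col cr0 cb0) nb (neq_col cr0 cb2)).
  exact: (col_shared o02 o20 (proj1 (andP ht02))).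
have rr10 : r1 != r0 by rewrite eq_sym.
have rr21 : r2 != r1 by rewrite eq_sym.
have rr20 : r2 != r0 by rewrite eq_sym.
have nc01 : ~ collinear (p r0) (p r1) (p b1) :=
  gp r0 r1 b1 rr01 (neq_col cr1 cb1) (neq_col cr0 cb1).
have nc02 : ~ collinear (p r0) (p r2) (p b2) :=
  gp r0 r2 b2 rr02 (neq_col cr2 cb2) (neq_col cr0 cb2).
have nc10 : ~ collinear (p r1) (p r0) (p b0) :=
  gp r1 r0 b0 rr10 (neq_col cr0 cb0) (neq_col cr1 cb0).
have nc12 : ~ collinear (p r1) (p r2) (p b2) :=
  gp r1 r2 b2 rr12 (neq_col cr2 cb2) (neq_col cr1 cb2).
have nc20 : ~ collinear (p r2) (p r0) (p b0) :=
  gp r2 r0 b0 rr20 (neq_col cr0 cb0) (neq_col cr2 cb0).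
have nc21 : ~ collinear (p r2) (p r1) (p b1) :=
  gp r2 r1 b1 rr21 (neq_col cr1 cb1) (neq_col cr2 cb1).
have cut0 := cut_edge mE.1 e0E.
have Sb01 : connect (adj (E :\ (r0, b0))) r0 b1 = connect (adj (E :\ (r0, b0))) r0 r1.
  apply: conn_edge; rewrite in_setD1 e1E andbT.
  by rewrite eq_sym; exact: n01.
have Sb02 : connect (adj (E :\ (r0, b0))) r0 b2 = connect (adj (E :\ (r0, b0))) r0 r2.
  apply: conn_edge; rewrite in_setD1 e2E andbT.
  by rewrite eq_sym; exact: n02.
have cut1 := cut_edge mE.1 e1E.
have Sb10 : connect (adj (E :\ (r1, b1))) r1 b0 = connect (adj (E :\ (r1, b1))) r1 r0.
  apply: conn_edge; rewrite in_setD1 e0E andbT.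
  by exact: n01.
have Sb12 : connect (adj (E :\ (r1, b1))) r1 b2 = connect (adj (E :\ (r1, b1))) r1 r2.
  apply: conn_edge; rewrite in_setD1 e2E andbT.
  by rewrite eq_sym; exact: n12.
have cut2 := cut_edge mE.1 e2E.
have Sb20 : connect (adj (E :\ (r2, b2))) r2 b0 = connect (adj (E :\ (r2, b2))) r2 r0.
  apply: conn_edge; rewrite in_setD1 e0E andbT.
  by exact: n02.
have Sb21 : connect (adj (E :\ (r2, b2))) r2 b1 = connect (adj (E :\ (r2, b2))) r2 r1.
  apply: conn_edge; rewrite in_setD1 e1E andbT.
  by exact: n12.
have H0 := (rng ht01 (dist_ge0 (p r0) (p b0))).1.
have H1 := (rng ht01 (dist_ge0 (p r0) (p b0))).2.
have H2 := (rng ht02 (dist_ge0 (p r0) (p b0))).1.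
have H3 := (rng ht02 (dist_ge0 (p r0) (p b0))).2.
have H4 := (rng ht10 (dist_ge0 (p r1) (p b1))).1.
have H5 := (rng ht10 (dist_ge0 (p r1) (p b1))).2.
have H6 := (rng ht12 (dist_ge0 (p r1) (p b1))).1.
have H7 := (rng ht12 (dist_ge0 (p r1) (p b1))).2.
have H8 := (rng ht20 (dist_ge0 (p r2) (p b2))).1.
have H9 := (rng ht20 (dist_ge0 (p r2) (p b2))).2.
have H10 := (rng ht21 (dist_ge0 (p r2) (p b2))).1.
have H11 := (rng ht21 (dist_ge0 (p r2) (p b2))).2.
have H12 := D3 o01 o02.
have H13 := D3 o10 o12.
have H14 := D3 o20 o21.
have H15 := P1 o01 o10 ht01 ht10 nc01.
have H16 := P2 o02 o12 ht02 ht12 nc01.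
have H17 := P1 o02 o20 ht02 ht20 nc02.
have H18 := P2 o01 o21 ht01 ht21 nc02.
have H19 := P1 o10 o01 ht10 ht01 nc10.
have H20 := P2 o12 o02 ht12 ht02 nc10. rewrite [dist q12 q02]dist_sym in H20.
have H21 := P1 o12 o21 ht12 ht21 nc12.
have H22 := P2 o10 o20 ht10 ht20 nc12.
have H23 := P1 o20 o02 ht20 ht02 nc20.
have H24 := P2 o21 o01 ht21 ht01 nc20. rewrite [dist q12 q01]dist_sym in H24.
have H25 := P1 o21 o12 ht21 ht12 nc21.
have H26 := P2 o20 o10 ht20 ht10 nc21. rewrite [dist q02 q01]dist_sym in H26.
have H27 : (true != connect (adj (E :\ (r0, b0))) r0 r1) -> dist (p r0) (p b0) <= dist (p r0) (p b1).
  by move=> h; apply: (exch_le mE e0E cr0 (negbT cb1)); rewrite ?connect0 ?cut0 ?Sb01 ?Sb02.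
have H28 : (true != connect (adj (E :\ (r0, b0))) r0 r2) -> dist (p r0) (p b0) <= dist (p r0) (p b2).
  by move=> h; apply: (exch_le mE e0E cr0 (negbT cb2)); rewrite ?connect0 ?cut0 ?Sb01 ?Sb02.
have H29 : (connect (adj (E :\ (r0, b0))) r0 r1 != false) -> dist (p r0) (p b0) <= dist (p r1) (p b0).
  by move=> h; apply: (exch_le mE e0E cr1 (negbT cb0)); rewrite ?connect0 ?cut0 ?Sb01 ?Sb02.
have H30 : (connect (adj (E :\ (r0, b0))) r0 r1 != connect (adj (E :\ (r0, b0))) r0 r2) -> dist (p r0) (p b0) <= dist (p r1) (p b2).
  by move=> h; apply: (exch_le mE e0E cr1 (negbT cb2)); rewrite ?connect0 ?cut0 ?Sb01 ?Sb02.
have H31 : (connect (adj (E :\ (r0, b0))) r0 r2 != false) -> dist (p r0) (p b0) <= dist (p r2) (p b0).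
  by move=> h; apply: (exch_le mE e0E cr2 (negbT cb0)); rewrite ?connect0 ?cut0 ?Sb01 ?Sb02.
have H32 : (connect (adj (E :\ (r0, b0))) r0 r2 != connect (adj (E :\ (r0, b0))) r0 r1) -> dist (p r0) (p b0) <= dist (p r2) (p b1).
  by move=> h; apply: (exch_le mE e0E cr2 (negbT cb1)); rewrite ?connect0 ?cut0 ?Sb01 ?Sb02.
have H33 : (connect (adj (E :\ (r1, b1))) r1 r0 != false) -> dist (p r1) (p b1) <= dist (p r0) (p b1).
  by move=> h; apply: (exch_le mE e1E cr0 (negbT cb1)); rewrite ?connect0 ?cut1 ?Sb10 ?Sb12.
have H34 : (connect (adj (E :\ (r1, b1))) r1 r0 != connect (adj (E :\ (r1, b1))) r1 r2) -> dist (p r1) (p b1) <= dist (p r0) (p b2).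
  by move=> h; apply: (exch_le mE e1E cr0 (negbT cb2)); rewrite ?connect0 ?cut1 ?Sb10 ?Sb12.
have H35 : (true != connect (adj (E :\ (r1, b1))) r1 r0) -> dist (p r1) (p b1) <= dist (p r1) (p b0).
  by move=> h; apply: (exch_le mE e1E cr1 (negbT cb0)); rewrite ?connect0 ?cut1 ?Sb10 ?Sb12.
have H36 : (true != connect (adj (E :\ (r1, b1))) r1 r2) -> dist (p r1) (p b1) <= dist (p r1) (p b2).
  by move=> h; apply: (exch_le mE e1E cr1 (negbT cb2)); rewrite ?connect0 ?cut1 ?Sb10 ?Sb12.
have H37 : (connect (adj (E :\ (r1, b1))) r1 r2 != connect (adj (E :\ (r1, b1))) r1 r0) -> dist (p r1) (p b1) <= dist (p r2) (p b0).
  by move=> h; apply: (exch_le mE e1E cr2 (negbT cb0)); rewrite ?connect0 ?cut1 ?Sb10 ?Sb12.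
have H38 : (connect (adj (E :\ (r1, b1))) r1 r2 != false) -> dist (p r1) (p b1) <= dist (p r2) (p b1).
  by move=> h; apply: (exch_le mE e1E cr2 (negbT cb1)); rewrite ?connect0 ?cut1 ?Sb10 ?Sb12.
have H39 : (connect (adj (E :\ (r2, b2))) r2 r0 != connect (adj (E :\ (r2, b2))) r2 r1) -> dist (p r2) (p b2) <= dist (p r0) (p b1).
  by move=> h; apply: (exch_le mE e2E cr0 (negbT cb1)); rewrite ?connect0 ?cut2 ?Sb20 ?Sb21.
have H40 : (connect (adj (E :\ (r2, b2))) r2 r0 != false) -> dist (p r2) (p b2) <= dist (p r0) (p b2).
  by move=> h; apply: (exch_le mE e2E cr0 (negbT cb2)); rewrite ?connect0 ?cut2 ?Sb20 ?Sb21.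
have H41 : (connect (adj (E :\ (r2, b2))) r2 r1 != connect (adj (E :\ (r2, b2))) r2 r0) -> dist (p r2) (p b2) <= dist (p r1) (p b0).
  by move=> h; apply: (exch_le mE e2E cr1 (negbT cb0)); rewrite ?connect0 ?cut2 ?Sb20 ?Sb21.
have H42 : (connect (adj (E :\ (r2, b2))) r2 r1 != false) -> dist (p r2) (p b2) <= dist (p r1) (p b2).
  by move=> h; apply: (exch_le mE e2E cr1 (negbT cb2)); rewrite ?connect0 ?cut2 ?Sb20 ?Sb21.
have H43 : (true != connect (adj (E :\ (r2, b2))) r2 r0) -> dist (p r2) (p b2) <= dist (p r2) (p b0).
  by move=> h; apply: (exch_le mE e2E cr2 (negbT cb0)); rewrite ?connect0 ?cut2 ?Sb20 ?Sb21.
have H44 : (true != connect (adj (E :\ (r2, b2))) r2 r1) -> dist (p r2) (p b2) <= dist (p r2) (p b1).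
  by move=> h; apply: (exch_le mE e2E cr2 (negbT cb1)); rewrite ?connect0 ?cut2 ?Sb20 ?Sb21.
exact: (key H0 H1 H2 H3 H4 H5 H6 H7 H8 H9 H10 H11 H12 H13 H14 H15 H16 H17 H18 H19 H20 H21 H22 H23 H24 H25 H26 H27 H28 H29 H30 H31 H32 H33 H34 H35 H36 H37 H38 H39 H40 H41 H42 H43 H44).
Qed.
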